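(* Let $F$ be a euclidean field and $B=F[\![X]\!]$. Every quadratic module $Q$ in $B$ is of exactly one of the following forms: (a) $Q=\Phi(F^2,0)$; (b) $Q=B$; (c) $Q=\Phi(F^2,0)\cup\Phi(\epsilon F^2,n)$ for some positive odd integer $n$ and $\epsilon\in\{1,-1\}$; (d) $Q=\Phi(F^2,0)\cup\Phi(F,n)\cup\Phi(F,n+1)$ for some positive integer $n$; (e) $Q=\Phi(F^2,0)\cup\Phi(\epsilon F^2,m)\cup\Phi(F,n)\cup\Phi(F,n+1)$ for some $\epsilon\in\{1,-1\}$, positive odd integer $m$ and positive integer $n$ with $m<n$. In particular, every quadratic module in $F[\![X]\!]$ is a preordering.
   Context: A euclidean field is a formally real field $F$ with $F=F^2\cup(-F^2)$, where $F^2=\{c^2:c\in F\}$; for $\epsilon\in\{\pm1\}$, $\epsilon F^2=\{\epsilon c^2: c\in F\}$. Let $B=F[\![X]\!]$, and for nonzero $f=\sum_{i\ge n}a_iX^i\in B$ with $a_n\ne0$ let $\mathrm{val}(f)=n$ and $\mathrm{an}(f)=a_n$. For a subset $M\subseteq F$ and an integer $n\ge0$, $$\Phi(M,n)=\{x\in B\setminus\{0\}:\ \mathrm{val}(x)\equiv n \pmod 2,\ \mathrm{val}(x)\ge n,\ \mathrm{an}(x)\in M\}\cup\{0\}.$$ A quadratic module in a commutative ring $R$ is a subset $Q$ with $Q+Q\subseteq Q$, $a^2Q\subseteq Q$ for all $a\in R$, and $1\in Q$; a preordering is a quadratic module closed under multiplication. *)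

(* Defs.v *)
From HB Require Import structures.
From mathcomp Require Import all_boot all_order all_algebra.
Set Implicit Arguments. Unset Strict Implicit. Unset Printing Implicit Defensive.
Import Order.TTheory GRing.Theory.
Local Open Scope ring_scope.

Definition fps (F : fieldType) := nat -> F.

Definition fps0 (F : fieldType) : fps F := fun _ => 0.
Definition fps1 (F : fieldType) : fps F := fun n => if n == 0%N then 1 else 0.
Definition fpsadd (F : fieldType) (f g : fps F) : fps F := fun n => f n + g n.
Definition fpsmul (F : fieldType) (f g : fps F) : fps F :=
  fun n => \sum_(i < n.+1) f i * g (n - i)%N.

Definition formally_real (F : fieldType) : Prop :=
  forall s : seq F, \sum_(x <- s) x ^+ 2 <> -1.

Definition euclidean (F : fieldType) : Prop :=
  formally_real F /\ forall a : F, exists c : F, a = c ^+ 2 \/ a = - c ^+ 2.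

Definition sqF (F : fieldType) : F -> Prop := fun a => exists c, a = c ^+ 2.
Definition epsSqF (F : fieldType) (eps : F) : F -> Prop :=
  fun a => exists c, a = eps * c ^+ 2.
Definition allF (F : fieldType) : F -> Prop := fun _ => True.

(* x <> 0 has val(x) = k and an(x) = x k *)
Definition has_val (F : fieldType) (x : fps F) (k : nat) : Prop :=
  (forall i, (i < k)%N -> x i = 0) /\ x k <> 0.

Definition Phi (F : fieldType) (M : F -> Prop) (n : nat) : fps F -> Prop :=
  fun x => x = fps0 F \/
    exists k, [/\ has_val x k, odd k = odd n, (n <= k)%N & M (x k)].

Definition quadratic_module (F : fieldType) (Q : fps F -> Prop) : Prop :=
  [/\ forall x y, Q x -> Q y -> Q (fpsadd x y),
      forall a x, Q x -> Q (fpsmul (fpsmul a a) x)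
    & Q (fps1 F)].

Definition preordering (F : fieldType) (Q : fps F -> Prop) : Prop :=
  quadratic_module Q /\ forall x y, Q x -> Q y -> Q (fpsmul x y).

Definition qm_formA (F : fieldType) (Q : fps F -> Prop) : Prop :=
  forall x, Q x <-> Phi (@sqF F) 0 x.
Definition qm_formB (F : fieldType) (Q : fps F -> Prop) : Prop :=
  forall x, Q x.
Definition qm_formC (F : fieldType) (Q : fps F -> Prop) : Prop :=
  exists (n : nat) (eps : F), [/\ (0 < n)%N, odd n, (eps = 1 \/ eps = -1) &
    forall x, Q x <-> Phi (@sqF F) 0 x \/ Phi (epsSqF eps) n x].
Definition qm_formD (F : fieldType) (Q : fps F -> Prop) : Prop :=
  exists n : nat, (0 < n)%N /\
    forall x, Q x <-> [\/ Phi (@sqF F) 0 x, Phi (@allF F) n x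
                        | Phi (@allF F) n.+1 x].
Definition qm_formE (F : fieldType) (Q : fps F -> Prop) : Prop :=
  exists (eps : F) (m n : nat),
    [/\ eps = 1 \/ eps = -1, (0 < m)%N /\ odd m, (0 < n)%N, (m < n)%N &
    forall x, Q x <-> [\/ Phi (@sqF F) 0 x, Phi (epsSqF eps) m x,
                          Phi (@allF F) n x | Phi (@allF F) n.+1 x]].

Definition exactly_one5 (P1 P2 P3 P4 P5 : Prop) : Prop :=
  (P1 \/ P2 \/ P3 \/ P4 \/ P5) /\
  (~ (P1 /\ P2) /\ ~ (P1 /\ P3) /\ ~ (P1 /\ P4) /\ ~ (P1 /\ P5) /\ ~ (P2 /\ P3) /\
   ~ (P2 /\ P4) /\ ~ (P2 /\ P5) /\ ~ (P3 /\ P4) /\ ~ (P3 /\ P5) /\ ~ (P4 /\ P5)).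

(* Main.v *)
Require Import Defs.
From HB Require Import structures.
From mathcomp Require Import all_boot all_order all_algebra.
From mathcomp Require Import boolp.
From mathcomp Require Import ring.
Set Implicit Arguments. Unset Strict Implicit. Unset Printing Implicit Defensive.
Import GRing.Theory.
Local Open Scope ring_scope.

Definition ps (F : fieldType) := fps F.
HB.instance Definition _ (F : fieldType) := Choice.on (ps F).

Definition psopp (F : fieldType) (f : ps F) : ps F := fun n => - f n.

Lemma psaddA (F : fieldType) : associative (@fpsadd F).
Proof. by move=> f g h; apply/funext=> n; rewrite /fpsadd addrA. Qed.
Lemma psaddC (F : fieldType) : commutative (@fpsadd F).
Proof. by move=> f g; apply/funext=> n; rewrite /fpsadd addrC. Qed.
Lemma psadd0 (F : fieldType) : left_id (@fps0 F) (@fpsadd F).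
Proof. by move=> f; apply/funext=> n; rewrite /fpsadd /fps0 add0r. Qed.
Lemma psaddN (F : fieldType) : left_inverse (@fps0 F) (@psopp F) (@fpsadd F).
Proof. by move=> f; apply/funext=> n; rewrite /fpsadd /fps0 /psopp addNr. Qed.

HB.instance Definition _ (F : fieldType) :=
  GRing.isZmodule.Build (ps F) (@psaddA F) (@psaddC F) (@psadd0 F) (@psaddN F).

Definition tr (F : fieldType) (n : nat) (f : fps F) : {poly F} := \poly_(i < n.+1) f i.
Lemma coef_tr (F : fieldType) n (f : fps F) i : (i <= n)%N -> (tr n f)`_i = f i.
Proof. by move=> h; rewrite /tr coef_poly ltnS h. Qed.
Lemma coefM_agree (F : fieldType) n (p p' q q' : {poly F}) :
  (forall i, (i <= n)%N -> p`_i = p'`_i) -> (forall i, (i <= n)%N -> q`_i = q'`_i) ->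
  (p * q)`_n = (p' * q')`_n.
Proof.
move=> hp hq; rewrite !coefM; apply: eq_bigr => i _.
rewrite (hp i) ?(hq (n - i)%N) //; first exact: leq_subr.
by rewrite -ltnS.
Qed.

Lemma fpsmul_tr (F : fieldType) (f g : fps F) n : fpsmul f g n = (tr n f * tr n g)`_n.
Proof.
rewrite coefM /fpsmul; apply: eq_bigr => i _.
have hi : (i <= n)%N by rewrite -ltnS.
by rewrite (coef_tr f hi) (coef_tr g (leq_subr i n)).
Qed.

Lemma tr_mul (F : fieldType) (f g : fps F) n i : (i <= n)%N ->
  (tr n (fpsmul f g))`_i = (tr n f * tr n g)`_i.
Proof.
move=> hi; rewrite (coef_tr _ hi) fpsmul_tr; apply: coefM_agree => j hj.
  by rewrite (coef_tr f hj) (coef_tr f (leq_trans hj hi)).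
by rewrite (coef_tr g hj) (coef_tr g (leq_trans hj hi)).
Qed.

Lemma psmulA (F : fieldType) : associative (@fpsmul F).
Proof.
move=> f g h; apply/funext=> n; rewrite !fpsmul_tr.
have e1 : (tr n (fpsmul f g) * tr n h)`_n = (tr n f * tr n g * tr n h)`_n.
  by apply: coefM_agree => i hi; [exact: tr_mul|].
have e2 : (tr n f * tr n (fpsmul g h))`_n = (tr n f * (tr n g * tr n h))`_n.
  by apply: coefM_agree => i hi; [|exact: tr_mul].
by rewrite e1 e2 mulrA.
Qed.

Lemma psmulC (F : fieldType) : commutative (@fpsmul F).
Proof. by move=> f g; apply/funext=> n; rewrite !fpsmul_tr mulrC. Qed.

Lemma tr1 (F : fieldType) n : tr n (fps1 F) = 1.
Proof.
apply/polyP=> i; rewrite /tr coef_poly coef1 /fps1.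
by case: i => [|i] //=; case: ifP.
Qed.

Lemma psmul1 (F : fieldType) : left_id (fps1 F) (@fpsmul F).
Proof. by move=> f; apply/funext=> n; rewrite fpsmul_tr tr1 mul1r (coef_tr f (leqnn n)). Qed.

Lemma psmulDl (F : fieldType) : left_distributive (@fpsmul F) (@fpsadd F).
Proof.
move=> f g h; apply/funext=> n; rewrite /fpsmul /fpsadd -big_split /=.
by apply: eq_bigr => i _; rewrite mulrDl.
Qed.

Lemma ps1_neq0 (F : fieldType) : (fps1 F : ps F) != 0.
Proof.
apply/eqP => h; have := congr1 (fun f : ps F => f 0%N) h.
rewrite /fps1 /=. move/eqP; rewrite oner_eq0 //.
Qed.

HB.instance Definition _ (F : fieldType) :=
  GRing.Zmodule_isComNzRing.Build (ps F) (@psmulA F) (@psmulC F) (@psmul1 F) (@psmulDl F) (@ps1_neq0 F).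




Definition mon (F : fieldType) (c : F) (k : nat) : ps F := fun n => if n == k then c else 0.
Definition cst (F : fieldType) (c : F) : ps F := mon c 0.

Lemma psE (F : fieldType) (f g : ps F) n : (f * g) n = \sum_(i < n.+1) f i * g (n - i)%N.
Proof. by []. Qed.
Lemma psaddE (F : fieldType) (f g : ps F) n : (f + g) n = f n + g n.
Proof. by []. Qed.
Lemma psoppE (F : fieldType) (f : ps F) n : (- f) n = - f n.
Proof. by []. Qed.
Lemma ps1E (F : fieldType) n : (1 : ps F) n = if n == 0%N then 1 else 0.
Proof. by []. Qed.
Lemma ps0E (F : fieldType) n : (0 : ps F) n = 0.
Proof. by []. Qed.

Lemma mulmonE (F : fieldType) (c : F) k (f : ps F) n :
  (mon c k * f) n = if (k <= n)%N then c * f (n - k)%N else 0.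
Proof.
rewrite psE /mon; case: leqP => hk.
  have hk' : (k < n.+1)%N by rewrite ltnS.
  rewrite (bigD1 (Ordinal hk')) //= eqxx big1 ?addr0 // => i hi.
  have -> : (nat_of_ord i == k) = false.
    by apply/negbTE; apply: contra hi => /eqP h; apply/eqP; apply: val_inj.
  by rewrite mul0r.
rewrite big1 // => i _.
have -> : (nat_of_ord i == k) = false.
  apply/negbTE; rewrite neq_ltn; apply/orP; left.
  exact: (leq_trans (ltn_ord i)).
by rewrite mul0r.
Qed.

Lemma mulmon (F : fieldType) (a b : F) i j : mon a i * mon b j = mon (a * b) (i + j).
Proof.
apply/funext => n; rewrite mulmonE /mon.
case: leqP => hi.
  case: eqP => h1; case: eqP => h2 //.
  - by exfalso; apply: h2; rewrite -h1 subnKC.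
  - by exfalso; apply: h1; rewrite h2 addKn.
  - by rewrite mulr0.
case: eqP => h2 //; exfalso; move: hi; rewrite h2.
by rewrite ltnNge leq_addr.
Qed.

Lemma cstM (F : fieldType) (a b : F) : cst (a * b) = cst a * cst b.
Proof. by rewrite /cst mulmon. Qed.
Lemma cstD (F : fieldType) (a b : F) : cst (a + b) = cst a + cst b.
Proof. by apply/funext => n; rewrite psaddE /cst /mon; case: eqP => _; rewrite ?addr0. Qed.
Lemma cst1 (F : fieldType) : cst (1 : F) = 1.
Proof. by []. Qed.
Lemma monN (F : fieldType) (a : F) k : mon (- a) k = - mon a k.
Proof. by apply/funext => n; rewrite psoppE /mon; case: eqP; rewrite ?oppr0. Qed.
Lemma mon_cst (F : fieldType) (a : F) k : mon a k = cst a * mon 1 k.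
Proof. by rewrite /cst mulmon mulr1 add0n. Qed.

Definition shift (F : fieldType) k (y : ps F) : ps F := fun n => y (n + k)%N.

Lemma shift_decomp (F : fieldType) k (y : ps F) :
  (forall i, (i < k)%N -> y i = 0) -> y = mon 1 k * shift k y.
Proof.
move=> h; apply/funext => n; rewrite mulmonE /shift.
case: leqP => hk; first by rewrite mul1r subnK.
exact: h.
Qed.

Lemma mul0E (F : fieldType) (f g : ps F) : (f * g) 0%N = f 0%N * g 0%N.
Proof. by rewrite psE big_ord1. Qed.

Fixpoint pre (F : fieldType) (step : nat -> (nat -> F) -> F) (n : nat) : seq F :=
  match n with
  | 0 => [::]
  | m.+1 => rcons (pre step m) (step m (fun i => nth 0 (pre step m) i))
  end.

Lemma size_pre (F : fieldType) step n : size (@pre F step n) = n.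
Proof. by elim: n => //= n IH; rewrite size_rcons IH. Qed.

Lemma nth_pre (F : fieldType) step n d i : (i < n)%N ->
  nth 0 (@pre F step (n + d)) i = nth 0 (pre step n) i.
Proof.
move=> hi; elim: d => [|d IH]; first by rewrite addn0.
by rewrite addnS /= nth_rcons size_pre (leq_trans hi (leq_addr _ _)).
Qed.

Lemma rec_exists (F : fieldType) (step : nat -> (nat -> F) -> F) :
  (forall n f g, (forall i, (i < n)%N -> f i = g i) -> step n f = step n g) ->
  exists v : nat -> F, forall n, v n = step n v.
Proof.
move=> hs; exists (fun n => nth 0 (pre step n.+1) n) => n /=.
rewrite nth_rcons size_pre ltnn eqxx; apply: hs => i hi.
have := nth_pre step (n - i.+1)%N (ltnSn i).
by rewrite subnKC // => ->.
Qed.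

Lemma inv_exists (F : fieldType) (r : ps F) : r 0%N != 0 -> exists t : ps F, t * r = 1.
Proof.
move=> hr.
pose step := (fun n (f : nat -> F) =>
   ((1 : ps F) n - \sum_(i < n) f i * r (n - i)%N) / r 0%N).
have [v hv] : exists v : nat -> F, forall n, v n = step n v.
  apply: rec_exists => n f g h; rewrite /step; congr ((_ - _) / _); apply: eq_bigr => i _; by rewrite h.
exists v; apply/funext => n; rewrite psE big_ord_recr /= subnn.
rewrite (hv n) mulfVK //; by rewrite addrC subrK.
Qed.

Lemma sqrt_exists (F : fieldType) (w : ps F) (c : F) : (2%:R : F) != 0 -> c != 0 ->
  w 0%N = c ^+ 2 -> exists r : ps F, r * r = w /\ r 0%N = c.
Proof.
move=> h2 hc hw.
pose step := (fun n (f : nat -> F) =>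
   if n is m.+1 then (w m.+1 - \sum_(i < m) f i.+1 * f (m - i)%N) / (c *+ 2) else c).
have [v hv] : exists v : nat -> F, forall n, v n = step n v.
  apply: rec_exists => -[|m] f g h //; rewrite /step; congr ((_ - _) / _); apply: eq_bigr => i _.
  rewrite !h //; first by rewrite ltnS leq_subr.
  by rewrite ltnS.
have v0 : v 0%N = c by rewrite hv.
exists v; split => //; apply/funext => [[|m]].
  by rewrite mul0E v0 hw expr2.
rewrite psE big_ord_recl big_ord_recr /= subn0 subnn v0.
have -> : \sum_(i < m) v (bump 0 i) * v (m.+1 - bump 0 i)%N
          = \sum_(i < m) v i.+1 * v (m - i)%N.
  by apply: eq_bigr => i _.
have -> : bump 0 m = m.+1 by [].
rewrite (hv m.+1) /step.
have hc2 : c *+ 2 != 0 by rewrite -mulr_natr mulf_neq0.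
by field; rewrite h2 hc.
Qed.



Lemma eu_sum2 (F : fieldType) (hF : euclidean F) (c d : F) : c ^+ 2 + d ^+ 2 = 0 -> c = 0.
Proof.
move=> h; apply/eqP; apply/negPn/negP => hc.
apply: (hF.1 [:: d / c]); rewrite big_cons big_nil addr0.
rewrite expr_div_n; apply: (mulIf (expf_neq0 2 hc)).
rewrite mulfVK ?expf_neq0 // mulN1r; apply/eqP; rewrite -addr_eq0 addrC.
by rewrite h.
Qed.

Lemma eu_2 (F : fieldType) (hF : euclidean F) : (2%:R : F) != 0.
Proof.
apply/negP => /eqP h; have := @eu_sum2 F hF 1 1.
by rewrite expr1n -mulr2n h => /(_ erefl) /eqP; rewrite oner_eq0.
Qed.

Lemma eu_N1 (F : fieldType) (hF : euclidean F) : (-1 : F) != 1.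
Proof.
apply/negP => /eqP h; move: (eu_2 hF); rewrite mulr2n -{1}h addNr.
by rewrite eqxx.
Qed.

Lemma eu_sgn (F : fieldType) (hF : euclidean F) (e e' c d : F) :
  (e = 1 \/ e = -1) -> (e' = 1 \/ e' = -1) -> c != 0 -> e * c ^+ 2 = e' * d ^+ 2 -> e = e'.
Proof.
move=> he he' hc h.
have key : forall c d : F, c != 0 -> c ^+ 2 <> - d ^+ 2.
  move=> c0 d0 hc0 h0; move/negP: hc0; apply; apply/eqP; apply: (eu_sum2 hF (d := d0)).
  by rewrite h0 addNr.
move: h; case: he => ->; case: he' => -> //; rewrite !mul1r !mulN1r => h.
- by exfalso; apply: (key c d hc).
- by exfalso; apply: (key c d hc); rewrite -h opprK.
Qed.

Lemma decomp (F : fieldType) (hF : euclidean F) (x : ps F) k : has_val x k ->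
  exists e r t, [/\ e = 1 \/ e = -1, x = r * r * mon e k, t * r = 1 &
     exists c, c != 0 /\ x k = e * c ^+ 2].
Proof.
move=> [hz hk].
have [c hc] := hF.2 (x k).
pose e : F := if x k == c ^+ 2 then 1 else -1.
have he : e = 1 \/ e = -1 by rewrite /e; case: eqP; [left|right].
have hxk : x k = e * c ^+ 2.
  rewrite /e; case: eqP => [->|hne]; first by rewrite mul1r.
  by case: hc => // ->; rewrite mulN1r.
have hc0 : c != 0.
  by apply/eqP => h0; apply: hk; rewrite hxk h0 expr0n mulr0.
have ee : e * e = 1 by case: he => ->; rewrite ?mulr1 ?mulrNN ?mulr1.
have hu := shift_decomp (hz : forall i, (i < k)%N -> x i = 0).
pose w := cst e * shift k x.
have hw : w 0%N = c ^+ 2.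
  by rewrite /w mul0E /shift add0n hxk mulrA ee mul1r.
have [r [hr hr0]] := sqrt_exists (eu_2 hF) hc0 hw.
have [t ht] : exists t : ps F, t * r = 1 by apply: inv_exists; rewrite hr0.
exists e, r, t; split => //; last by exists c.
have cee : cst e * cst e = 1 by rewrite -cstM ee.
rewrite hr /w mon_cst {1}hu.
transitivity ((cst e * cst e) * (mon 1 k * shift k x)); first by rewrite cee mul1r.
ring.
Qed.


Lemma qm_sq (F : fieldType) (Q : fps F -> Prop) (hQ : quadratic_module Q) (a x : ps F) :
  Q x -> Q (a * a * x).
Proof. by case: hQ => _ h _; apply: h. Qed.
Lemma qm_add (F : fieldType) (Q : fps F -> Prop) (hQ : quadratic_module Q) (x y : ps F) :
  Q x -> Q y -> Q (x + y).
Proof. by case: hQ => h _ _; apply: h. Qed.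
Lemma qm_1 (F : fieldType) (Q : fps F -> Prop) (hQ : quadratic_module Q) : Q (1 : ps F).
Proof. by case: hQ. Qed.
Lemma qm_0 (F : fieldType) (Q : fps F -> Prop) (hQ : quadratic_module Q) : Q (0 : ps F).
Proof. by have := qm_sq hQ 0 (qm_1 hQ); rewrite !mul0r. Qed.

Lemma QP (F : fieldType) (Q : fps F -> Prop) (hQ : quadratic_module Q) (x r t : ps F) e k :
  x = r * r * mon e k -> t * r = 1 -> (Q x <-> Q (mon e k)).
Proof.
move=> hx ht; split => h; last by rewrite hx; apply: qm_sq.
have := qm_sq hQ t h; rewrite hx.
have -> : t * t * (r * r * mon e k) = (t * r) * (t * r) * mon e k by ring.
by rewrite ht !mul1r.
Qed.

Lemma P_even (F : fieldType) (Q : fps F -> Prop) (hQ : quadratic_module Q) k :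
  ~~ odd k -> Q (mon 1 k).
Proof.
move=> hk; have := qm_sq hQ (mon 1 k./2) (qm_1 hQ).
rewrite mulr1 mulmon mulr1 addnn.
by rewrite -[in X in _ -> X](odd_double_half k) (negbTE hk) add0n.
Qed.

Lemma P_shift2 (F : fieldType) (Q : fps F -> Prop) (hQ : quadratic_module Q) e k :
  Q (mon e k) -> Q (mon e k.+2).
Proof.
move=> h; have := qm_sq hQ (mon 1 1) h.
by rewrite !mulmon !mul1r.
Qed.

Lemma P_full (F : fieldType) (hF : euclidean F) (Q : fps F -> Prop) (hQ : quadratic_module Q) k :
  Q (mon 1 k) -> Q (mon (-1) k) -> forall y : ps F, (forall i, (i < k)%N -> y i = 0) -> Q y.
Proof.
move=> h1 h2 y hy.
pose g := shift k y.
pose h := cst (2%:R^-1 : F).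
have hh : h * (1 + 1) = 1.
  by rewrite -cst1 -cstD -cstM -mulr2n mulVf // eu_2.
have := qm_add hQ (qm_sq hQ (h * (g + 1)) h1) (qm_sq hQ (h * (g - 1)) h2).
have -> : h * (g + 1) * (h * (g + 1)) * mon 1 k + h * (g - 1) * (h * (g - 1)) * mon (-1) k
   = (h * (1 + 1)) * (h * (1 + 1)) * (mon 1 k * g).
  rewrite monN; ring.
by rewrite hh !mul1r -shift_decomp.
Qed.

Lemma P_full' (F : fieldType) (hF : euclidean F) (Q : fps F -> Prop) (hQ : quadratic_module Q) k :
  Q (mon 1 k) -> Q (mon (-1) k) -> forall e k', (k <= k')%N -> Q (mon e k').
Proof.
move=> h1 h2 e k' hk; apply: (P_full hF hQ h1 h2) => i hi.
rewrite /mon; case: eqP => // hik; exfalso; move: hi; rewrite hik ltnNge hk.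
by [].
Qed.



Definition sgn (F : fieldType) (e : F) := e = 1 \/ e = -1.
Definition RA (F : fieldType) (e : F) k := ~~ odd k /\ e = 1.
Definition RC (F : fieldType) m (eps e : F) k := (~~ odd k /\ e = 1) \/ [/\ odd k, (m <= k)%N & e = eps].
Definition RD (F : fieldType) n (e : F) k := (~~ odd k /\ e = 1) \/ (n <= k)%N.
Definition RE (F : fieldType) m n (eps e : F) k :=
  [\/ ~~ odd k /\ e = 1, [/\ odd k, (m <= k)%N & e = eps] | (n <= k)%N].

Lemma ex_min (p : nat -> Prop) : (exists n, p n) -> exists n, p n /\ forall m, p m -> (n <= m)%N.
Proof.
move=> h.
have h' : exists n, (fun n => `[< p n >]) n by case: h => n hn; exists n; apply/asboolP.
case: (ex_minnP h') => n /asboolP hn hmin; exists n; split => // m hm.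
by apply: hmin; apply/asboolP.
Qed.

Lemma odd_le_double (k k' : nat) : (k <= k')%N -> odd k = odd k' -> k' = (k + (k' - k)./2.*2)%N.
Proof.
move=> hk ho.
have he : odd (k' - k) = false by rewrite oddB // ho addbb.
by have := odd_double_half (k' - k)%N; rewrite he add0n => ->; rewrite subnKC.
Qed.

Lemma classify (F : fieldType) (P : F -> nat -> Prop) :
  (-1 : F) != 1 ->
  (forall k, ~~ odd k -> P 1 k) ->
  (forall e k, P e k -> P e k.+2) ->
  (forall k, P 1 k -> P (-1) k -> forall e k', (k <= k')%N -> P e k') ->
  (forall e k, sgn e -> (P e k <-> RA e k)) \/
      (forall e k, sgn e -> P e k) \/
      (exists m eps, [/\ (0 < m)%N, odd m, sgn eps & forall e k, sgn e -> (P e k <-> RC m eps e k)]) \/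
      (exists n, (0 < n)%N /\ forall e k, sgn e -> (P e k <-> RD n e k)) \/
      (exists eps m n, [/\ sgn eps, (0 < m)%N /\ odd m, (0 < n)%N, (m < n)%N &
                       forall e k, sgn e -> (P e k <-> RE m n eps e k)]).
Proof.
move=> hN h0 h2 hf.
have hsh : forall e k j, P e k -> P e (k + j.*2)%N.
  move=> e k j hk; elim: j => [|j IH]; first by rewrite addn0.
  by rewrite doubleS !addnS; apply: h2.
have hsh' : forall e k k', (k <= k')%N -> odd k = odd k' -> P e k -> P e k'.
  by move=> e k k' hk ho hp; rewrite (odd_le_double hk ho); apply: hsh.
pose full k := P 1 k /\ P (-1) k.
have seq_sign : forall e e' k, sgn e -> sgn e' -> P e k -> P e' k -> ~ full k -> e = e'.
  move=> e e' k [->|->] [->|->] // ha hb hnf; exfalso; apply: hnf; by split.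
have even_sign : forall e k, sgn e -> ~~ odd k -> P e k -> ~ full k -> e = 1.
  by move=> e k he hk hp hnf; apply: (seq_sign e 1 k he (or_introl erefl) hp (h0 k hk) hnf).
case: (lem (exists k, full k)) => [hex|hnex].
- have [n [[hn1 hn2] hmin]] := ex_min hex.
  have hnf : forall k, (k < n)%N -> ~ full k.
    by move=> k hk hfk; have := hmin k hfk; rewrite leqNgt hk.
  have hge : forall e k, (n <= k)%N -> P e k by move=> e k; apply: hf.
  case: (lem (exists k, [/\ odd k, (k < n)%N & exists e, sgn e /\ P e k])) => [hod|hnod].
  + have [m [[hm1 hm2 [eps [heps hPm]]] hmmin]] := ex_min hod.
    do 4 right; exists eps, m, n; split => //.
    * by split => //; case: m hm1 {hm2 hPm hmmin}.
    * by apply: leq_ltn_trans hm2.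
    move=> e k he; split => [hp|].
    * case: (leqP n k) => hk; first by apply: Or33.
      case ho: (odd k).
      - apply: Or32; split => //.
        + by apply: hmmin; split => //; exists e.
        + have hmk : (m <= k)%N by apply: hmmin; split => //; exists e.
          symmetry; apply: (seq_sign eps e k heps he _ hp (hnf k hk)).
          by apply: (hsh' eps m k hmk _ hPm); rewrite hm1 ho.
      - by apply: Or31; split; [rewrite ho|apply: (even_sign e k he _ hp (hnf k hk)); rewrite ho].
    * case => [[hk ->]|[hk hmk ->]|hk]; first exact: h0.
      - by apply: (hsh' eps m k hmk _ hPm); rewrite hm1 hk.
      - exact: hge.
  + case: n hn1 hn2 hmin hnf hge hnod => [|n] hn1 hn2 hmin hnf hge hnod.
    * by right; left => e k _; apply: hge.
    * do 3 right; left; exists n.+1; split => // e k he; split => [hp|].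
      - case: (leqP n.+1 k) => hk; first by right.
        case ho: (odd k).
        + by exfalso; apply: hnod; exists k; split => //; exists e.
        + by left; split; [rewrite ho|apply: (even_sign e k he _ hp (hnf k hk)); rewrite ho].
      - by case => [[hk ->]|hk]; [exact: h0|exact: hge].
- have hnf : forall k, ~ full k by move=> k hk; apply: hnex; exists k.
  case: (lem (exists k, odd k /\ exists e, sgn e /\ P e k)) => [hod|hnod].
  + have [m [[hm1 [eps [heps hPm]]] hmmin]] := ex_min hod.
    right; right; left; exists m, eps; split => //.
      by case: m hm1 {hPm hmmin}.
    move=> e k he; split => [hp|].
    * case ho: (odd k).
      - right; split => //.
        + by apply: hmmin; split => //; exists e.
        + have hmk : (m <= k)%N by apply: hmmin; split => //; exists e.
          symmetry; apply: (seq_sign eps e k heps he _ hp (hnf k)).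
          by apply: (hsh' eps m k hmk _ hPm); rewrite hm1 ho.
      - by left; split; [rewrite ho|apply: (even_sign e k he _ hp (hnf k)); rewrite ho].
    * case => [[hk ->]|[hk hmk ->]]; first exact: h0.
      by apply: (hsh' eps m k hmk _ hPm); rewrite hm1 hk.
  + left => e k he; split => [hp|].
    * case ho: (odd k).
      - by exfalso; apply: hnod; exists k; split => //; exists e.
      - by split; [rewrite ho|apply: (even_sign e k he _ hp (hnf k)); rewrite ho].
    * by case => hk ->; apply: h0.
Qed.

Lemma Pmul (F : fieldType) (P : F -> nat -> Prop) :
  (forall k, ~~ odd k -> P 1 k) ->
  (forall e k, P e k -> P e k.+2) ->
  (forall k, P 1 k -> P (-1) k -> forall e k', (k <= k')%N -> P e k') ->
  forall e1 e2 k1 k2, sgn e1 -> sgn e2 -> P e1 k1 -> P e2 k2 -> P (e1 * e2) (k1 + k2)%N.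
Proof.
move=> h0 h2 hf.
have hsh : forall e k j, P e k -> P e (k + j.*2)%N.
  move=> e k j hk; elim: j => [|j IH]; first by rewrite addn0.
  by rewrite doubleS !addnS; apply: h2.
have hsh' : forall e k k', (k <= k')%N -> odd k = odd k' -> P e k -> P e k'.
  by move=> e k k' hk ho hp; rewrite (odd_le_double hk ho); apply: hsh.
have even_case : forall e1 e2 k1 k2, sgn e1 -> sgn e2 -> ~~ odd k1 -> P e1 k1 -> P e2 k2 ->
    P (e1 * e2) (k1 + k2)%N.
  move=> e1 e2 k1 k2 [->|->] he2 hk1 hp1 hp2.
  - rewrite mul1r; apply: (hsh' e2 k2) => //; first exact: leq_addl.
    by rewrite oddD (negbTE hk1).
  - exact: (hf k1 (h0 k1 hk1) hp1 _ _ (leq_addr _ _)).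
move=> e1 e2 k1 k2 he1 he2 hp1 hp2.
case ho1: (odd k1); last by apply: even_case => //; rewrite ho1.
case ho2: (odd k2); last by rewrite mulrC addnC; apply: even_case => //; rewrite ho2.
have hev : ~~ odd (k1 + k2) by rewrite oddD ho1 ho2.
case: he1 he2 hp1 hp2 => -> [->|->] hp1 hp2; rewrite ?mulr1 ?mulN1r ?opprK //; try exact: h0.
- case: (leqP k1 k2) => hk.
  + exact: (hf k2 (hsh' _ _ _ hk (etrans ho1 (esym ho2)) hp1) hp2 _ _ (leq_addl _ _)).
  + exact: (hf k1 hp1 (hsh' _ _ _ (ltnW hk) (etrans ho2 (esym ho1)) hp2) _ _ (leq_addr _ _)).
- case: (leqP k1 k2) => hk.
  + exact: (hf k2 hp2 (hsh' _ _ _ hk (etrans ho1 (esym ho2)) hp1) _ _ (leq_addl _ _)).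
  + exact: (hf k1 (hsh' _ _ _ (ltnW hk) (etrans ho2 (esym ho1)) hp2) hp1 _ _ (leq_addr _ _)).
Qed.



Lemma val_uniq (F : fieldType) (x : ps F) k k' : has_val x k -> has_val x k' -> k = k'.
Proof.
move=> [h1 h2] [h1' h2']; case: (ltngtP k k') => // hk; exfalso.
- by apply: h2; apply: h1'.
- by apply: h2'; apply: h1.
Qed.

Lemma Phi_char (F : fieldType) (M : F -> Prop) n (x : ps F) k : has_val x k ->
  (Phi M n x <-> [/\ odd k = odd n, (n <= k)%N & M (x k)]).
Proof.
move=> hv; split.
- case => [hx|[k' [hv' ho hn hM]]].
    by exfalso; case: hv => _; rewrite hx.
  by rewrite (val_uniq hv hv').
- by case => ho hn hM; right; exists k.
Qed.

Lemma nz_val (F : fieldType) (x : ps F) : x <> 0 -> exists k, has_val x k.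
Proof.
move=> hx.
have [n hn] : exists n, x n <> 0.
  apply: contrapT => h; apply: hx; apply/funext => n.
  by apply: contrapT => hn; apply: h; exists n.
have [k [hk hmin]] := @ex_min (fun n => x n <> 0) (ex_intro _ n hn).
exists k; split => // i hi; apply: contrapT => hxi.
by have := hmin i hxi; rewrite leqNgt hi.
Qed.

Lemma mon_val (F : fieldType) (e : F) k : e != 0 -> has_val (mon e k) k.
Proof.
move=> he; split; last by rewrite /mon eqxx; apply/eqP.
by move=> i hi; rewrite /mon; case: eqP => // h; move: hi; rewrite h ltnn.
Qed.

Lemma sgn_neq0 (F : fieldType) (e : F) : sgn e -> e != 0.
Proof. by case => ->; rewrite ?oppr_eq0 oner_eq0. Qed.

Lemma glue (F : fieldType) (hF : euclidean F) (Q : fps F -> Prop) (hQ : quadratic_module Q)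
  (RHS : ps F -> Prop) (R : F -> nat -> Prop) :
  RHS 0 ->
  (forall x e k c, has_val x k -> sgn e -> c != 0 -> x k = e * c ^+ 2 -> (RHS x <-> R e k)) ->
  ((forall x : ps F, Q x <-> RHS x) <-> (forall e k, sgn e -> (Q (mon e k) <-> R e k))).
Proof.
move=> h0 hR; split.
- move=> h e k he; rewrite h; apply: (hR _ e k 1 (mon_val k (sgn_neq0 he)) he (oner_neq0 _)).
  by rewrite /mon eqxx expr1n mulr1.
- move=> h x; case: (lem (x = 0 :> ps F)) => [->|hx]; first by split => // _; apply: qm_0.
  have [k hk] := nz_val hx.
  have [e [r [t [he hx' ht [c [hc hxk]]]]]] := decomp hF hk.
  rewrite (QP hQ hx' ht) h // (hR x e k c) //.
Qed.

Lemma sq_char (F : fieldType) (hF : euclidean F) (e eps c : F) : sgn e -> sgn eps -> c != 0 ->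
  (epsSqF eps (e * c ^+ 2) <-> e = eps).
Proof.
move=> he heps hc; split; first by case=> d hd; apply: (eu_sgn hF he heps hc hd).
by move=> ->; exists c.
Qed.

Lemma sq_char1 (F : fieldType) (hF : euclidean F) (e c : F) : sgn e -> c != 0 ->
  (sqF (e * c ^+ 2) <-> e = 1).
Proof.
move=> he hc; rewrite -(sq_char hF he (or_introl (erefl (1:F))) hc); split.
- by case=> d hd; exists d; rewrite mul1r.
- by case=> d hd; exists d; rewrite hd mul1r.
Qed.

Lemma charA (F : fieldType) (hF : euclidean F) (x : ps F) e k c :
  has_val x k -> sgn e -> c != 0 -> x k = e * c ^+ 2 -> (Phi (@sqF F) 0 x <-> RA e k).
Proof.
move=> hv he hc hxk; rewrite (propext (Phi_char _ _ hv)) hxk (propext (sq_char1 hF he hc)) /RA.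
by split; [case=> -> _ ->|case=> /negbTE -> ->].
Qed.

Lemma charC (F : fieldType) (hF : euclidean F) m (eps : F) (x : ps F) e k c :
  odd m -> sgn eps ->
  has_val x k -> sgn e -> c != 0 -> x k = e * c ^+ 2 ->
  (Phi (@sqF F) 0 x \/ Phi (epsSqF eps) m x <-> RC m eps e k).
Proof.
move=> hm heps hv he hc hxk; rewrite (propext (Phi_char _ _ hv)) (propext (Phi_char _ _ hv)) hxk.
rewrite (propext (sq_char1 hF he hc)) (propext (sq_char hF he heps hc)) /RC hm.
split.
- case => [[ho _ ->]|[ho hmk ->]].
  + by left; split => //; rewrite ho.
  + by right; split => //; rewrite ho.
- case => [[/negbTE ho ->]|[ho hmk ->]].
  + by left; split => //; rewrite ho.
  + by right; split => //; rewrite ho.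
Qed.

Lemma allD_char n k :
  (odd k = odd n /\ (n <= k)%N) \/ (odd k = odd n.+1 /\ (n.+1 <= k)%N) <-> (n <= k)%N.
Proof.
split; first by case => [[_ h]|[_ h]] //; apply: ltnW.
move=> hk; case: (eqVneq k n) => [->|hne]; first by left.
have hk' : (n < k)%N by rewrite ltn_neqAle eq_sym hne.
case ho: (odd k == odd n); first by left; rewrite (eqP ho).
by right; split => //=; move/negbT: ho; case: (odd k); case: (odd n).
Qed.

Lemma charD (F : fieldType) (hF : euclidean F) n (x : ps F) e k c :
  has_val x k -> sgn e -> c != 0 -> x k = e * c ^+ 2 ->
  ([\/ Phi (@sqF F) 0 x, Phi (@allF F) n x | Phi (@allF F) n.+1 x] <-> RD n e k).
Proof.
move=> hv he hc hxk; rewrite !(propext (Phi_char _ _ hv)) hxk (propext (sq_char1 hF he hc)) /RD.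
split.
- case => [[ho _ ->]|[_ h _]|[_ h _]].
  + by left; split => //; rewrite ho.
  + by right.
  + by right; apply: ltnW.
- case => [[/negbTE ho ->]|h]; first by apply: Or31; split => //; rewrite ho.
  by case: (proj2 (allD_char n k) h) => [[ho h']|[ho h']]; [apply: Or32|apply: Or33].
Qed.

Lemma charE (F : fieldType) (hF : euclidean F) m n (eps : F) (x : ps F) e k c :
  odd m -> sgn eps ->
  has_val x k -> sgn e -> c != 0 -> x k = e * c ^+ 2 ->
  ([\/ Phi (@sqF F) 0 x, Phi (epsSqF eps) m x, Phi (@allF F) n x | Phi (@allF F) n.+1 x]
     <-> RE m n eps e k).
Proof.
move=> hm heps hv he hc hxk; rewrite !(propext (Phi_char _ _ hv)) hxk (propext (sq_char1 hF he hc)).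
rewrite (propext (sq_char hF he heps hc)) /RE hm.
split.
- case => [[ho _ ->]|[ho hmk ->]|[ho h _]|[ho h _]].
  + by apply: Or31; split => //; rewrite ho.
  + by apply: Or32; split => //; rewrite ho.
  + by apply: Or33; apply: (proj1 (allD_char n k)); left.
  + by apply: Or33; apply: (proj1 (allD_char n k)); right.
- case => [[/negbTE ho ->]|[ho hmk ->]|h]; first by apply: Or41; split => //; rewrite ho.
    by apply: Or42; split => //; rewrite ho.
  by case: (proj2 (allD_char n k) h) => [[ho h']|[ho h']]; [apply: Or43|apply: Or44].
Qed.



Lemma Phi0 (F : fieldType) (M : F -> Prop) n : Phi M n (0 : ps F).
Proof. by left. Qed.

Lemma sgn_opp (F : fieldType) (hF : euclidean F) (eps : F) : sgn eps -> sgn (- eps) /\ - eps <> eps.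
Proof.
move=> [->|->]; rewrite ?opprK; split; try (by [left|right]); move/eqP; apply/negP.
- exact: eu_N1.
- by rewrite eq_sym; apply: eu_N1.
Qed.

Theorem mainTheorem16 (F : fieldType) (hF : euclidean F) (Q : fps F -> Prop) :
  quadratic_module Q ->
  exactly_one5 (qm_formA Q) (qm_formB Q) (qm_formC Q) (qm_formD Q) (qm_formE Q)
  /\ preordering Q.
Proof.
move=> hQ.
pose P (e : F) k := Q (mon e k).
have h0 : forall k, ~~ odd k -> P 1 k := P_even hQ.
have h2 : forall e k, P e k -> P e k.+2 := P_shift2 hQ.
have hf : forall k, P 1 k -> P (-1) k -> forall e k', (k <= k')%N -> P e k' := P_full' hF hQ.
have hN := eu_N1 hF.
have s1 : sgn (1 : F) by left.
have sN1 : sgn (-1 : F) by right.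
have fA : qm_formA Q <-> forall e k, sgn e -> (P e k <-> RA e k).
  exact: (glue hF hQ (Phi0 _ _) (charA hF)).
have fB : qm_formB Q <-> forall e k, sgn e -> P e k.
  split => [h e k _|h x]; first exact: h.
  have := proj2 (glue hF hQ (RHS := fun _ => True) (R := fun _ _ => True) I
     (fun _ _ _ _ _ _ _ _ => conj (fun _ => I) (fun _ => I))).
  by move=> /(_ (fun e k he => conj (fun _ => I) (fun _ => h e k he))) /(_ x) [_ hh]; apply: hh.
have fC : forall m eps, odd m -> sgn eps ->
    ((forall x : ps F, Q x <-> Phi (@sqF F) 0 x \/ Phi (epsSqF eps) m x) <->
     forall e k, sgn e -> (P e k <-> RC m eps e k)).
  move=> m eps hm heps; apply: (glue hF hQ (RHS := fun x => _ \/ _)); first by left; left.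
  by move=> x e k c; apply: charC.
have fD : forall n,
    ((forall x : ps F, Q x <-> [\/ Phi (@sqF F) 0 x, Phi (@allF F) n x | Phi (@allF F) n.+1 x]) <->
     forall e k, sgn e -> (P e k <-> RD n e k)).
  move=> n; apply: (glue hF hQ (RHS := fun x => [\/ _, _ | _])); first by apply: Or31; left.
  by move=> x e k c; apply: charD.
have fE : forall eps m n, odd m -> sgn eps ->
    ((forall x : ps F, Q x <-> [\/ Phi (@sqF F) 0 x, Phi (epsSqF eps) m x,
                          Phi (@allF F) n x | Phi (@allF F) n.+1 x]) <->
     forall e k, sgn e -> (P e k <-> RE m n eps e k)).
  move=> eps m n hm heps; apply: (glue hF hQ (RHS := fun x => [\/ _, _, _ | _])).
    by apply: Or41; left.
  by move=> x e k c; apply: charE.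
split; [split|].
- case: (classify hN h0 h2 hf) => [hA|[hB|[hC|[hD|hE]]]].
  + by left; apply/fA.
  + by right; left; apply/fB.
  + right; right; left; case: hC => m [eps [hm0 hm heps hR]].
    by exists m, eps; split => //; apply/(fC m eps hm heps).
  + right; right; right; left; case: hD => n [hn hR].
    by exists n; split => //; apply/(fD n).
  + do 4 right; case: hE => eps [m [n [heps [hm0 hm] hn hmn hR]]].
    by exists eps, m, n; split => //; apply/(fE eps m n hm heps).
-
  have gA : qm_formA Q -> forall e k, sgn e -> (P e k <-> RA e k) by move/fA.
  have gB : qm_formB Q -> forall e k, sgn e -> P e k by move/fB.
  have gC : qm_formC Q -> exists m eps, [/\ odd m, sgn eps &
      forall e k, sgn e -> (P e k <-> RC m eps e k)].
    by case=> m [eps [hm0 hm heps h]]; exists m, eps; split => //; apply/(fC m eps hm heps).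
  have gD : qm_formD Q -> exists n, (0 < n)%N /\ forall e k, sgn e -> (P e k <-> RD n e k).
    by case=> n [hn h]; exists n; split => //; apply/(fD n).
  have gE : qm_formE Q -> exists eps m n, [/\ sgn eps, odd m, (m < n)%N &
      forall e k, sgn e -> (P e k <-> RE m n eps e k)].
    case=> eps [m [n [heps [hm0 hm] hn hmn h]]]; exists eps, m, n; split => //.
    by apply/(fE eps m n hm heps).
  have nA : forall k, ~ RA (-1 : F) k by move=> k [_ h]; move/eqP: hN; apply.
  have nAo : forall (e : F) k, odd k -> ~ RA e k by move=> e k hk [h _]; rewrite hk in h.
  split; [|split; [|split; [|split; [|split; [|split; [|split; [|split; [|split]]]]]]]].
  + move=> [/gA a /gB b]; exact: (nA 0%N (proj1 (a _ _ sN1) (b _ _ sN1))).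
  + move=> [/gA a /gC [m [eps [hm heps c]]]].
    apply: (nAo eps m hm); apply/(a _ _ heps)/(c _ _ heps); right; split => //.
  + move=> [/gA a /gD [n [hn d]]].
    by apply: (nA n); apply/(a _ _ sN1)/(d _ _ sN1); right.
  + move=> [/gA a /gE [eps [m [n [heps hm hmn e]]]]].
    by apply: (nA n); apply/(a _ _ sN1)/(e _ _ sN1); apply: Or33.
  + move=> [/gB b /gC [m [eps [hm heps c]]]].
    have := proj1 (c _ _ sN1) (b _ 0%N sN1).
    by case=> [[_ h]|[h _ _]] //; move/eqP: hN; rewrite h.
  + move=> [/gB b /gD [n [hn d]]].
    have := proj1 (d _ _ sN1) (b _ 0%N sN1).
    by case=> [[_ h]|h]; [move/eqP: hN; rewrite h|rewrite leqn0 in h; rewrite (eqP h) in hn].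
  + move=> [/gB b /gE [eps [m [n [heps hm hmn e]]]]].
    have := proj1 (e _ _ sN1) (b _ 0%N sN1).
    case=> [[_ h]|[h _ _]|h] //; first by move/eqP: hN; rewrite h.
    by rewrite leqn0 in h; rewrite (eqP h) in hmn.
  + move=> [/gC [m [eps [hm heps c]]] /gD [n [hn d]]].
    have [hs hne] := sgn_opp hF heps.
    have hnk : (n <= (m + n).*2.+1)%N.
      by apply: leqW; rewrite -addnn; apply: leq_trans (leq_addr _ _); apply: leq_addl.
    have := proj1 (c _ ((m + n).*2.+1) hs) (proj2 (d _ _ hs) (or_intror hnk)).
    by case=> [[h _]|[_ _ h]] //; rewrite /= odd_double in h.
  + move=> [/gC [m [eps [hm heps c]]] /gE [eps' [m' [n' [heps' hm' hmn' e]]]]].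
    have [hs hne] := sgn_opp hF heps.
    have hnk : (n' <= n'.*2.+1)%N by apply: leqW; rewrite -addnn leq_addr.
    have := proj1 (c _ (n'.*2.+1) hs) (proj2 (e _ _ hs) (Or33 _ _ hnk)).
    by case=> [[h _]|[_ _ h]] //; rewrite /= odd_double in h.
  + move=> [/gD [n [hn d]] /gE [eps [m [n' [heps hm hmn e]]]]].
    have [hs hne] := sgn_opp hF heps.
    case: (leqP n m) => hnm.
    * have := proj1 (e _ m hs) (proj2 (d _ _ hs) (or_intror hnm)).
      case=> [[h _]|[_ _ h]|h] //; first by rewrite hm in h.
      by rewrite leqNgt hmn in h.
    * have := proj1 (d _ m heps) (proj2 (e _ _ heps) (Or32 _ _ (And3 hm (leqnn m) erefl))).
      case=> [[h _]|h]; first by rewrite hm in h.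
      by rewrite leqNgt hnm in h.
- split => // x y hx hy.
  change (Q ((x : ps F) * y)).
  case: (lem (x = 0 :> ps F)) => [->|hx0]; first by rewrite mul0r; apply: qm_0.
  case: (lem (y = 0 :> ps F)) => [->|hy0]; first by rewrite mulr0; apply: qm_0.
  have [k1 hk1] := nz_val hx0; have [k2 hk2] := nz_val hy0.
  have [e1 [r1 [t1 [he1 hx1 ht1 _]]]] := decomp hF hk1.
  have [e2 [r2 [t2 [he2 hy2 ht2 _]]]] := decomp hF hk2.
  have p1 := proj1 (QP hQ hx1 ht1) hx.
  have p2 := proj1 (QP hQ hy2 ht2) hy.
  have := qm_sq hQ (r1 * r2) (Pmul h0 h2 hf he1 he2 p1 p2).
  rewrite -mulmon hx1 hy2.
  by have -> : r1 * r2 * (r1 * r2) * (mon e1 k1 * mon e2 k2) = r1 * r1 * mon e1 k1 * (r2 * r2 * mon e2 k2) by ring.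
Qed.
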